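(* Let $X_1,X_2$ be independent random variables on $S^1$, each centered at $P=(1,0)$. Then $$V(X_1+X_2)=V(X_1)+V(X_2)-\frac{V(X_1)V(X_2)}{2}.$$
   Context: A random variable $X$ on $S^1=\{x\in\mathbb{R}^2:\|x\|=1\}$ is given by a density of its angle $\Theta\in[-\pi,\pi)$, with $X=(\cos\Theta,\sin\Theta)$. $X$ is centered at $P=(1,0)$ if its mean value lies in the direction of $P$, i.e. $E[\sin\Theta]=0$. The variance is $V(X)=E[\|X-P\|^2]=E[2-2\cos\Theta]$. For independent $X_1,X_2$ with angles $\Theta_1,\Theta_2$, the sum $X_1+X_2$ is the point with angle $\Theta_1+\Theta_2$ (mod $2\pi$), i.e. its angle has density $f(\theta)=\int_{-\pi}^{\pi}f_1(\theta')f_2(\theta-\theta')\,d\theta'$. *)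

(* Defs.v *)
(* densities on [-pi, pi[ w.r.t. Lebesgue measure. *)
From HB Require Import structures.
From mathcomp Require Import all_boot all_order all_algebra.
From mathcomp Require Import all_classical all_reals all_analysis.
Set Implicit Arguments. Unset Strict Implicit. Unset Printing Implicit Defensive.
Import Order.TTheory GRing.Theory Num.Theory.
Local Open Scope classical_set_scope.
Local Open Scope ring_scope.

Section S1.
Variable R : realType.

Definition angle_dom : set R := `[- pi, pi[%classic.

Definition wrap (x : R) : R :=
  x - 2 * pi * (Num.floor ((x + pi) / (2 * pi)))%:~R.

Definition is_angle_density (f : R -> R) : Prop :=
  [/\ measurable_fun angle_dom f,
      (forall x, angle_dom x -> 0 <= f x) &
      (\int[lebesgue_measure]_(x in angle_dom) (f x)%:E = 1)%E].

Definition angle_expect (f : R -> R) (g : R -> R) : R :=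
  Rintegral lebesgue_measure angle_dom (fun t => g t * f t).

(* X = (cos Theta, sin Theta) is centered_at_P at P = (1,0): E[sin Theta] = 0 *)
Definition centered_at_P (f : R -> R) : Prop := angle_expect f sin = 0.

(* V(X) = E[||X - P||^2] = E[2 - 2 cos Theta] *)
Definition circ_variance (f : R -> R) : R :=
  angle_expect f (fun t => 2 - 2 * cos t).

(* density of the angle of X1 + X2 (angles added mod 2 pi) *)
Definition circ_conv (f1 f2 : R -> R) (th : R) : R :=
  Rintegral lebesgue_measure angle_dom (fun t => f1 t * f2 (wrap (th - t))).

End S1.

(* Main.v *)
Require Import Defs.
From HB Require Import structures.
From mathcomp Require Import all_boot all_order all_algebra.
From mathcomp Require Import all_classical all_reals all_analysis.
From mathcomp Require Import measurable_realfun lra ring.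
Import Order.TTheory GRing.Theory Num.Theory.
Local Open Scope ring_scope.
Local Open Scope classical_set_scope.
Local Open Scope ring_scope.
Section T.
Variable R : realType.
Local Notation mu := (@lebesgue_measure R).

Lemma lebesgue_shift (c : R) A : measurable A ->
  mu A = pushforward mu (fun x => x + c) A.
Proof.
have mphi : measurable_fun setT (fun x : R => x + c) by apply: measurable_funD.
move=> mA.
unshelve eapply (@lebesgue_measure_unique R (@pushforward _ _ (measurableTypeR R) (measurableTypeR R) R mu (fun x => x + c) : measure (measurableTypeR R) R)).
- exact: mphi.
- move=> _ [[a b] _ <-] /=.
  rewrite /pushforward.
  have -> : (fun x => x + c) @^-1` `]a, b] = `]a - c, b - c]%classic.
    apply/seteqP; split => x /=; rewrite !in_itv /= => /andP[h1 h2]; apply/andP; split; lra.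
  rewrite !lebesgue_measure_itv /= !lte_fin ltrD2r; case: ifP => // _.
  by rewrite -!EFinB; congr (_%:E); lra.
- exact: mA.
Qed.

Lemma integral_shift (c : R) (K : R -> \bar R) : measurable_fun setT K ->
  (forall x : R, 0 <= K x)%E -> (\int[mu]_x K (x + c)%R = \int[mu]_x K x)%E.
Proof.
move=> mK K0.
have mphi : measurable_fun setT (fun x : R => x + c) by apply: measurable_funD.
pose pf : measure (measurableTypeR R) R := ltac:(unshelve refine (@pushforward _ _ (measurableTypeR R) (measurableTypeR R) R mu (fun x => x + c) : measure _ R); exact: mphi).
have -> : (\int[mu]_x K x = \int[pf]_x K x)%E.
  by apply: (@eq_measure_integral _ _ _ _ pf) => A mA _; exact: lebesgue_shift.
rewrite /pf /=.
rewrite ge0_integral_pushforward //.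
Qed.

Lemma integral_shift_itv (G : R -> \bar R) (a b c : R) : measurable_fun setT G ->
  (forall x : R, 0 <= G x)%E ->
  (\int[mu]_(x in `[a, b[) G x)%E = integral mu `[a + c, b + c[ (fun x : R => G (x - c)).
Proof.
move=> mG G0.
rewrite integral_mkcond [RHS]integral_mkcond.
have mK : measurable_fun setT (G \_ `[a, b[).
  by apply/measurable_restrict => //; apply: measurable_funS mG.
rewrite -(@integral_shift (- c) _ mK); last first.
  by move=> x; rewrite /patch; case: ifP.
apply: eq_integral => x _; rewrite /patch.
have -> : (x - c \in `[a, b[%classic) = (x \in `[a + c, b + c[%classic).
  by apply/idP/idP; rewrite !inE /= !in_itv /= => /andP[h1 h2]; apply/andP; split; lra.
by [].
Qed.

Lemma pi2_gt0 : 0 < 2 * pi :> R.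
Proof. by rewrite mulr_gt0 // pi_gt0. Qed.

Lemma wrap_in (x : R) : @angle_dom R (Defs.wrap x).
Proof.
rewrite /angle_dom /Defs.wrap /= in_itv /=.
have := floor_itv ((x + pi) / (2 * pi)); rewrite intrD => /andP[h1 h2].
rewrite ler_pdivlMr ?pi2_gt0 // in h1.
rewrite ltr_pdivrMr ?pi2_gt0 // in h2.
apply/andP; split; lra.
Qed.

Lemma wrap_id (x : R) : @angle_dom R x -> Defs.wrap x = x.
Proof.
rewrite /angle_dom /Defs.wrap /= in_itv /= => /andP[h1 h2].
have -> : Num.floor ((x + pi) / (2 * pi)) = 0.
  apply: floor_def; rewrite add0r; apply/andP; split.
    by rewrite /= divr_ge0 //; lra.
  by rewrite /= ltr_pdivrMr ?pi2_gt0 //; lra.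
by rewrite /= mulr0z mulr0 subr0.
Qed.

Lemma wrap_per (x : R) : Defs.wrap (x + 2 * pi) = Defs.wrap x.
Proof.
rewrite /Defs.wrap.
have -> : (x + 2 * pi + pi) / (2 * pi) = (x + pi) / (2 * pi) + 1.
  have := pi2_gt0; rewrite lt0r => /andP[h _].
  by rewrite [x + _ + _]addrAC mulrDl divff.
rewrite floorDrz ?int_num1 // floor1 intrD; ring.
Qed.

Lemma measurable_wrap : measurable_fun setT (@Defs.wrap R).
Proof.
rewrite /Defs.wrap; apply: measurable_funB => //; apply: measurable_funM => //.
apply: (measurableT_comp (f := fun y : R => ((Num.floor y)%:~R : R)) (g := fun x : R => (x + pi) / (2 * pi))).
  apply: measurable_realfun.nondecreasing_measurable => // u v uv.
  by rewrite ler_int le_floor.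
by apply: measurable_funM => //; apply: measurable_funD.
Qed.

Lemma itv_splitU (a b c : R) : a <= b -> b <= c ->
  `[a, c[%classic = `[a, b[%classic `|` `[b, c[%classic.
Proof.
move=> ab bc; apply/seteqP; split => x /=; rewrite !in_itv /=.
  move=> /andP[h1 h2]; case: (leP b x) => hb; [right|left]; apply/andP; split; lra.
by move=> [] /andP[h1 h2]; apply/andP; split; lra.
Qed.

Lemma itv_disj (a b c : R) : [disjoint `[a, b[%classic & `[b, c[%classic].
Proof.
by apply/disj_setPS => x [] /=; rewrite !in_itv /= => /andP[_ h1] /andP[h2 _]; lra.
Qed.

Lemma integral_periodic (G : R -> \bar R) (a : R) : measurable_fun setT G ->
  (forall x : R, 0 <= G x)%E -> (forall x : R, G (x + 2 * pi) = G x) ->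
  - (2 * pi) <= a <= 0 ->
  integral mu `[a, a + 2 * pi[ G = integral mu `[- pi, pi[ G.
Proof.
move=> mG G0 Gp /andP[a1 a2].
have p0 := pi_gt0 R.
have mI (u v : R) : measurable `[u, v[%classic by exact: measurable_itv.
have mGI (A : set R) : measurable_fun A G by apply: measurable_funS mG.
case: (leP (- pi) a) => ha.
- rewrite (itv_splitU a pi (a + 2 * pi)); [|lra|lra].
  rewrite (itv_splitU (- pi) a pi); [|lra|lra].
  rewrite ge0_integral_setU //; [|exact: mGI|exact: itv_disj].
  rewrite [in RHS]ge0_integral_setU //; [|exact: mGI|exact: itv_disj].
  rewrite addeC; congr (_ + _)%E.
  rewrite (@integral_shift_itv G _ _ (- (2 * pi)) mG G0).
  have -> : pi + - (2 * pi) = - pi :> R by lra.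
  have -> : a + 2 * pi + - (2 * pi) = a by lra.
  by apply: eq_integral => x _; rewrite opprK Gp.
- rewrite (itv_splitU a (- pi) (a + 2 * pi)); [|lra|lra].
  rewrite (itv_splitU (- pi) (a + 2 * pi) pi); [|lra|lra].
  rewrite ge0_integral_setU //; [|exact: mGI|exact: itv_disj].
  rewrite [in RHS]ge0_integral_setU //; [|exact: mGI|exact: itv_disj].
  rewrite addeC; congr (_ + _)%E.
  rewrite (@integral_shift_itv G _ _ (2 * pi) mG G0).
  have -> : - pi + 2 * pi = pi :> R by lra.
  by apply: eq_integral => x _; rewrite -[in RHS](subrK (2 * pi) x) Gp.
Qed.
Local Notation D := (@angle_dom R).

Lemma mD : measurable D.
Proof. exact: measurable_itv. Qed.

Definition rs (f : R -> R) : R -> R := patch (fun=> 0) D f.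

Lemma rs_ge0 (f : R -> R) : (forall x, D x -> 0 <= f x) -> forall x : R, 0 <= rs f x.
Proof. by move=> f0 x; rewrite /rs /patch; case: ifPn => // /set_mem; exact: f0. Qed.

Lemma rs_meas (f : R -> R) : measurable_fun D f -> measurable_fun setT (rs f).
Proof.
move=> mf.
have := (@measurable_restrict _ _ (measurableTypeR R) (measurableTypeR R) D setT f mD measurableT).1.
by rewrite setTI => /(_ mf).
Qed.

Lemma rsE (f : R -> R) (x : R) : D x -> rs f x = f x.
Proof. by move=> Dx; rewrite /rs /patch mem_set. Qed.

Lemma rsN (f : R -> R) (x : R) : ~ D x -> rs f x = 0.
Proof. by move=> Dx; rewrite /rs /patch memNset. Qed.

Lemma bounded_by (g : R -> R) (B : R) : (forall x, `|g x| <= B) -> [bounded g x | x in D].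
Proof.
move=> gB; exists B; split; first exact: num_real.
by move=> r Br x _ /=; exact: le_trans (gB x) (ltW Br).
Qed.

Section density.
Variable f : R -> R.
Hypothesis hf : is_angle_density f.

Lemma dens_meas : measurable_fun D f. Proof. by case: hf. Qed.
Lemma dens_ge0 x : D x -> 0 <= f x. Proof. by case: hf => _ + _; apply. Qed.
Lemma dens_int1 : (\int[mu]_(x in D) (f x)%:E)%E = 1%E. Proof. by case: hf. Qed.

Lemma dens_int : mu.-integrable D (EFin \o f).
Proof.
apply/integrableP; split.
  by apply/measurable_EFinP; exact: dens_meas.
have -> : (\int[mu]_(x in D) `|(EFin \o f) x|)%E = (\int[mu]_(x in D) (f x)%:E)%E.
  by apply: eq_integral => x /set_mem Dx /=; rewrite ger0_norm // dens_ge0.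
by rewrite dens_int1 ltry.
Qed.

Lemma dens_intM (g : R -> R) (B : R) : measurable_fun D g -> (forall x, `|g x| <= B) ->
  mu.-integrable D (EFin \o (fun x => g x * f x)).
Proof.
move=> mg gB; have := integrableMr (mu := mu) mD mg (@bounded_by g B gB) dens_int.
by apply: eq_integrable => [|x _ /=]; [exact: mD | rewrite EFinM].
Qed.

Lemma dens_R1 : Rintegral mu D f = 1.
Proof. by rewrite /Rintegral dens_int1. Qed.

End density.
Arguments dens_meas {f}. Arguments dens_ge0 {f}. Arguments dens_int1 {f}.
Arguments dens_int {f}. Arguments dens_intM {f}. Arguments dens_R1 {f}.

Lemma Rint_E (g : R -> R) : mu.-integrable D (EFin \o g) ->
  (\int[mu]_(x in D) (g x)%:E)%E = (Rintegral mu D g)%:E.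
Proof. by move=> ig; rewrite /Rintegral fineK // integrable_fin_num //; exact: mD. Qed.

Lemma mcos : measurable_fun setT (@cos R).
Proof. exact: continuous_measurable_fun (@continuous_cos R). Qed.
Lemma msin : measurable_fun setT (@sin R).
Proof. exact: continuous_measurable_fun (@continuous_sin R). Qed.

Lemma intD' (F G : R -> R) : mu.-integrable D (EFin \o F) -> mu.-integrable D (EFin \o G) ->
  mu.-integrable D (EFin \o (fun x => F x + G x)).
Proof.
move=> iF iG; have := integrableD (mu := mu) mD iF iG.
by apply: eq_integrable => [|x _ /=]; [exact: mD | rewrite EFinD].
Qed.

Section lin.
Variable f : R -> R.
Hypothesis hf : is_angle_density f.

Lemma intZ (g : R -> R) (B k : R) : measurable_fun setT g -> (forall x, `|g x| <= B) ->
  mu.-integrable D (EFin \o (fun s => k * (g s * f s))).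
Proof.
move=> mg gB.
have mkg : measurable_fun D (fun s => k * g s).
  by apply: measurable_funM => //; exact: measurable_funS mg.
have := dens_intM hf (fun s => k * g s) (`|k| * B) mkg.
have kgB : forall x, `|k * g x| <= `|k| * B.
  by move=> x; rewrite normrM ler_wpM2l.
move=> /(_ kgB).
by apply: eq_integrable => [|x _ /=]; [exact: mD | rewrite mulrA].
Qed.

Lemma lin_int (a b c : R) :
  mu.-integrable D (EFin \o (fun s => (a + b * cos s + c * sin s) * f s)).
Proof.
have ia : mu.-integrable D (EFin \o (fun s => a * f s)).
  have := dens_intM hf (fun _ => a) `|a| (measurable_cst _) (fun _ => lexx _).
  by apply: eq_integrable => [|x _ //]; exact: mD.
have ib := intZ cos 1 b mcos (@cos_max R).
have ic := intZ sin 1 c msin (@sin_max R).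
have := intD' _ _ (intD' _ _ ia ib) ic.
by apply: eq_integrable => [|x _ /=]; [exact: mD | congr EFin; ring].
Qed.

Lemma lin (a b c : R) :
  Rintegral mu D (fun s => (a + b * cos s + c * sin s) * f s) =
  a + b * Rintegral mu D (fun s => cos s * f s) + c * Rintegral mu D (fun s => sin s * f s).
Proof.
transitivity (Rintegral mu D (fun s => (a * f s + b * (cos s * f s)) + c * (sin s * f s))).
  by apply: eq_Rintegral => s _; ring.
have ia : mu.-integrable D (EFin \o (fun s => a * f s)).
  have := dens_intM hf (fun _ => a) `|a| (measurable_cst _) (fun _ => lexx _).
  by apply: eq_integrable => [|x _ //]; exact: mD.
have ib := intZ cos 1 b mcos (@cos_max R).
have ic := intZ sin 1 c msin (@sin_max R).
have ic' : mu.-integrable D (EFin \o (fun s => cos s * f s)).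
  exact: (dens_intM hf cos 1 (measurable_funS measurableT (@subsetT _ D) mcos) (@cos_max R)).
have is' : mu.-integrable D (EFin \o (fun s => sin s * f s)).
  exact: (dens_intM hf sin 1 (measurable_funS measurableT (@subsetT _ D) msin) (@sin_max R)).
rewrite RintegralD //; [|exact: mD|exact: intD'].
rewrite RintegralD //; last exact: mD.
rewrite !RintegralZl //; [|exact: mD|exact: mD|exact: mD|exact: (dens_int hf)].
by rewrite dens_R1 // mulr1.
Qed.

End lin.

Lemma var_dens (f : R -> R) : is_angle_density f ->
  circ_variance f = 2 - 2 * Rintegral mu D (fun s => cos s * f s).
Proof.
move=> hf; rewrite /circ_variance /angle_expect.
transitivity (Rintegral mu D (fun s => (2 + (-2) * cos s + 0 * sin s) * f s)).
  by apply: eq_Rintegral => s _; congr (_ * _); ring.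
by rewrite (@lin f hf); ring.
Qed.

Section key.
Variables f1 f2 : R -> R.
Hypothesis hf1 : is_angle_density f1.
Hypothesis hf2 : is_angle_density f2.

Definition Gc (th : R) : \bar R :=
  (\int[mu]_(t in D) (f1 t * f2 (Defs.wrap (th - t)))%:E)%E.

Definition psi (p : R * R) : R := rs f1 p.2 * rs f2 (Defs.wrap (p.1 - p.2)).

Lemma mpsi : measurable_fun setT psi.
Proof.
apply: measurable_funM.
  apply: (measurableT_comp (f := rs f1) (g := snd)).
    exact: rs_meas (dens_meas hf1).
  exact: measurable_snd.
apply: (measurableT_comp (f := rs f2) (g := fun p : R * R => Defs.wrap (p.1 - p.2))).
  exact: rs_meas (dens_meas hf2).
apply: (measurableT_comp (f := @Defs.wrap R) (g := fun p : R * R => p.1 - p.2)).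
  exact: measurable_wrap.
by apply: measurable_funB; [exact: measurable_fst | exact: measurable_snd].
Qed.

Lemma psi_ge0 p : 0 <= psi p.
Proof. by apply: mulr_ge0; apply: rs_ge0; [exact: dens_ge0 hf1 | exact: dens_ge0 hf2]. Qed.

Lemma G_eq th : Gc th = (\int[mu]_t (psi (th, t))%:E)%E.
Proof.
rewrite /Gc integral_mkcond; apply: eq_integral => t _.
rewrite /psi /rs /patch /=; case: ifPn => Dt.
  by rewrite (mem_set (wrap_in _)).
by rewrite mul0r.
Qed.

Lemma G_meas : measurable_fun setT Gc.
Proof.
have -> : Gc = (fun th => \int[mu]_t (psi (th, t))%:E)%E.
  by apply/funext => th; exact: G_eq.
apply: (measurable_fun_fubini_tonelli_F (m2 := mu) (EFin \o psi)).
  by apply/measurable_EFinP; exact: mpsi.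
by move=> p; rewrite /= lee_fin psi_ge0.
Qed.

Section hfun.
Variable h : R -> R.
Hypothesis mh : measurable_fun setT h.
Hypothesis h0 : forall x, 0 <= h x.
Hypothesis hper : forall x, h (x + 2 * pi) = h x.

Definition phi (p : R * R) : R := rs h p.1 * psi p.

Lemma mphi : measurable_fun setT phi.
Proof.
apply: measurable_funM; last exact: mpsi.
apply: (measurableT_comp (f := rs h) (g := fst)); last exact: measurable_fst.
by apply: rs_meas; exact: measurable_funS mh.
Qed.

Lemma phi_ge0 p : 0 <= phi p.
Proof. by apply: mulr_ge0; [apply: rs_ge0 => x _; exact: h0 | exact: psi_ge0]. Qed.

Lemma key_a : (\int[mu]_(th in D) ((h th)%:E * Gc th))%E =
  (\int[mu]_th \int[mu]_t (phi (th, t))%:E)%E.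
Proof.
rewrite integral_mkcond; apply: eq_integral => th _.
rewrite /patch; case: ifPn => Dth.
  rewrite G_eq -ge0_integralZl_EFin //.
  - by apply: eq_integral => t _; rewrite /phi /rs /patch Dth /= EFinM.
  - by move=> t _; rewrite lee_fin psi_ge0.
  - apply/measurable_EFinP.
    exact: (measurable_fun_pair2 (f := psi) th mpsi).
rewrite integral0_eq // => t _.
by rewrite /phi /rs /patch (negbTE Dth) mul0r.
Qed.

Lemma key : (\int[mu]_(th in D) ((h th)%:E * Gc th))%E =
  (\int[mu]_(t in D) ((f1 t)%:E * \int[mu]_(s in D) (h (s + t) * f2 s)%:E))%E.
Proof.
rewrite key_a.
have mEphi : measurable_fun setT (EFin \o phi) by apply/measurable_EFinP; exact: mphi.
have Ephi0 : forall p, (0 <= (EFin \o phi) p)%E by move=> p; rewrite /= lee_fin phi_ge0.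
transitivity (\int[mu]_t \int[mu]_th (phi (th, t))%:E)%E.
  exact: (fubini_tonelli (m1 := mu) (m2 := mu) (EFin \o phi) mEphi Ephi0).
rewrite [RHS]integral_mkcond; apply: eq_integral => t _.
rewrite /patch; case: ifPn => Dt; last first.
  rewrite integral0_eq // => th _.
  by rewrite /phi /psi (@rsN f1) /= ?mul0r ?mulr0 //; move=> /mem_set H; rewrite H in Dt.
have Dt' : D t := set_mem Dt.
transitivity (\int[mu]_th ((f1 t)%:E * (rs h th * rs f2 (Defs.wrap (th - t)))%:E))%E.
  by apply: eq_integral => th _; rewrite /phi /psi /= (@rsE f1 t Dt') -EFinM; congr EFin; ring.
rewrite ge0_integralZl_EFin //; last 3 first.
- by move=> th _; rewrite lee_fin; apply: mulr_ge0; apply: rs_ge0; [move=> x _; exact: h0 | exact: dens_ge0 hf2].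
- have mm : measurable_fun setT (fun th : R => rs h th * rs f2 (Defs.wrap (th - t))).
    apply: measurable_funM.
      by apply: rs_meas; exact: measurable_funS mh.
    have mw : measurable_fun setT (fun th : R => Defs.wrap (th - t)).
      apply: (measurableT_comp (f := @Defs.wrap R) (g := fun th : R => th - t)).
        exact: measurable_wrap.
      exact: measurable_funB.
    exact: (measurableT_comp (rs_meas f2 (dens_meas hf2)) mw).
  by apply/measurable_EFinP; exact: mm.
- exact: (dens_ge0 hf1 t Dt').
congr (_ * _)%E.
transitivity (\int[mu]_(th in D) (h th * rs f2 (Defs.wrap (th - t)))%:E)%E.
  rewrite [RHS]integral_mkcond; apply: eq_integral => th _; rewrite [RHS]/patch.
  case: (boolP (th \in D)) => Dth; first by rewrite (@rsE h th (set_mem Dth)).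
  by rewrite (@rsN h th) ?mul0r //; move=> /mem_set H; rewrite H in Dth.
pose Gt := fun u => (h (u + t) * rs f2 (Defs.wrap u))%:E.
have mGt : measurable_fun setT Gt.
  have ma : measurable_fun setT (fun u : R => u + t) by exact: measurable_funD.
  have m1 : measurable_fun setT (fun u : R => h (u + t)) := measurableT_comp mh ma.
  have m2 : measurable_fun setT (fun u : R => rs f2 (Defs.wrap u)) :=
    measurableT_comp (rs_meas f2 (dens_meas hf2)) measurable_wrap.
  by apply/measurable_EFinP; exact: measurable_funM m1 m2.
have Gt0 : forall u : R, (0 <= Gt u)%E.
  by move=> u; rewrite lee_fin; apply: mulr_ge0; [exact: h0 | apply: rs_ge0; exact: dens_ge0 hf2].
have Gtp : forall u, Gt (u + 2 * pi) = Gt u.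
  by move=> u; rewrite /Gt wrap_per addrAC hper.
transitivity (\int[mu]_(th in D) Gt (th - t)%R)%E.
  by apply: eq_integral => th _; rewrite /Gt subrK.
rewrite /angle_dom.
have E1 := @integral_shift_itv Gt (- pi - t) (pi - t) t mGt Gt0.
rewrite !subrK in E1; rewrite -E1.
have -> : pi - t = (- pi - t) + 2 * pi :> R by lra.
rewrite (@integral_periodic Gt (- pi - t) mGt Gt0 Gtp); last first.
  move: Dt'; rewrite /angle_dom /= in_itv /= => /andP[t1 t2].
  have p0 := pi_gt0 R.
  by apply/andP; split; lra.
by apply: eq_integral => s /set_mem Ds; rewrite /Gt wrap_id // rsE.
Qed.

End hfun.

Lemma G_ge0 th : (0 <= Gc th)%E.
Proof. by rewrite G_eq; apply: integral_ge0 => t _; rewrite lee_fin psi_ge0. Qed.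

Lemma G_int1 : (\int[mu]_(th in D) Gc th)%E = 1%E.
Proof.
have K := key (fun _ => 1) (measurable_cst _) (fun _ => ler01) (fun _ => erefl).
have -> : (\int[mu]_(th in D) Gc th)%E = (\int[mu]_(th in D) ((1:R)%:E * Gc th))%E.
  by apply: eq_integral => th _; rewrite mul1e.
rewrite K.
transitivity (\int[mu]_(t in D) (f1 t)%:E)%E; last exact: dens_int1 hf1.
apply: eq_integral => t _.
have -> : (\int[mu]_(s in D) ((1:R) * f2 s)%:E)%E = 1%E.
  by rewrite -(dens_int1 hf2); apply: eq_integral => s _; rewrite mul1r.
by rewrite mule1.
Qed.

Lemma G_integrable : mu.-integrable D Gc.
Proof.
apply/integrableP; split.
  exact: (measurable_funS measurableT (@subsetT _ D) G_meas).
have -> : (\int[mu]_(x in D) `|Gc x|)%E = (\int[mu]_(x in D) Gc x)%E.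
  by apply: eq_integral => x _; rewrite gee0_abs // G_ge0.
by rewrite G_int1 ltry.
Qed.

Lemma conv_var : centered_at_P f2 ->
  circ_variance (circ_conv f1 f2) =
  2 - 2 * (Rintegral mu D (fun s => cos s * f1 s) * Rintegral mu D (fun s => cos s * f2 s)).
Proof.
move=> c2.
have S2 : Rintegral mu D (fun s => sin s * f2 s) = 0 := c2.
pose hv := fun x : R => 2 - 2 * cos x.
have mhv : measurable_fun setT hv.
  by apply: measurable_funB => //; apply: measurable_funM => //; exact: mcos.
have hv0 : forall x, 0 <= hv x by move=> x; rewrite /hv; have := cos_le1 x; lra.
have hvp : forall x, hv (x + 2 * pi) = hv x.
  by move=> x; rewrite /hv (mulr_natl pi 2) cosD2pi.
rewrite /circ_variance /angle_expect.
transitivity (fine (\int[mu]_(th in D) ((hv th)%:E * Gc th))%E).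
  rewrite /Rintegral; congr fine.
  apply: (ae_eq_integral (mu := mu)).
  - exact: mD.
  - apply/measurable_EFinP; apply: measurable_funM.
      exact: (measurable_funS measurableT (@subsetT _ D) mhv).
    have mG : measurable_fun setT (fun x => fine (Gc x)).
      exact: (measurableT_comp (fine_measurable measurableT) G_meas).
    exact: (measurable_funS measurableT (@subsetT _ D) mG).
  - apply: emeasurable_funM.
      apply/measurable_EFinP; exact: (measurable_funS measurableT (@subsetT _ D) mhv).
    exact: (measurable_funS measurableT (@subsetT _ D) G_meas).
  - apply: filterS (integrable_ae (mu := mu) mD G_integrable) => x Gx Dx.
    have -> : circ_conv f1 f2 x = fine (Gc x) by [].
    by rewrite EFinM fineK //; exact: Gx.
rewrite (key hv mhv hv0 hvp).
transitivity (fine (\int[mu]_(t in D) ((2 + (- 2 * Rintegral mu D (fun s => cos s * f2 s)) * cos t + 0 * sin t) * f1 t)%:E)%E).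
  congr fine; apply: eq_integral => t _.
  transitivity ((f1 t)%:E * ((2 + (- 2 * cos t) * Rintegral mu D (fun s => cos s * f2 s) + (2 * sin t) * Rintegral mu D (fun s => sin s * f2 s)))%:E)%E.
    congr (_ * _)%E.
    transitivity (\int[mu]_(s in D) ((2 + (- 2 * cos t) * cos s + (2 * sin t) * sin s) * f2 s)%:E)%E.
      by apply: eq_integral => s _; rewrite /hv cosD; congr EFin; ring.
    by rewrite (Rint_E _ (lin_int f2 hf2 2 (- 2 * cos t) (2 * sin t))) (lin f2 hf2).
  by rewrite S2 -EFinM; congr EFin; ring.
rewrite (Rint_E _ (lin_int f1 hf1 _ _ _)) /= (lin f1 hf1).
ring.
Qed.

End key.

End T.

Theorem theorem3p7 (R : realType) (f1 f2 : R -> R) :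
  is_angle_density f1 -> is_angle_density f2 ->
  centered_at_P f1 -> centered_at_P f2 ->
  circ_variance (circ_conv f1 f2) = circ_variance f1 + circ_variance f2 - circ_variance f1 * circ_variance f2 / 2.
Proof.
move=> hf1 hf2 c1 c2.
rewrite (@conv_var R f1 f2 hf1 hf2 c2) (@var_dens R f1 hf1) (@var_dens R f2 hf2).
by field.
Qed.
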